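(* Let $s\ge2$, $k\ge1$ and $s_0$ be integers with $0\le s_0<\min\{k,s\}$. Let $n=sk+s_0$, $d_c=\lfloor n/s\rfloor=k$, $d_o=\lfloor(n-1)/(s-1)\rfloor$, and let $$g(s,k,s_0)=\frac{\gamma_{cc}}{\gamma_{MBR,o}},\qquad \gamma_{MBR,o}=\frac{2d_oM}{2kd_o-k^2+k},$$ where $\gamma_{cc}$ is the repair bandwidth of the Cubic Code for the Fixed Cluster Repair System with parameters $(n,k,s)$ storing a file of size $M$. Then $$g(s,k,s_0)\le\frac{1}{2(1-e^{-1})}\cdot\frac{(s+3)k+s-3}{(s+1)k-1}.$$
   Context: FCRS with parameters $(n,k,s)$: $n=ds+s_0$ servers, $d=\lfloor n/s\rfloor$ (here $d=d_c=k$), clusters $1,\dots,s$ of size $d$ and cluster $s+1$ of size $s_0$; any $k$ servers recover the file; a failed server in cluster $r$ is repaired by downloading from all $d$ servers of a cluster $i\in[s]$, $i\ne r$. Cubic Code: encode $m$ file chunks (each of size $M/m$) with a $(d^{s+1},m)$ MDS code with symbols $C_b$ indexed by $b=b_{s+1}\cdots b_1$, $b_i\in[d]$; server $(i,j)$ stores $\{C_b:b_i=j\}$; to repair $(r,\ell)$ from cluster $i$, server $(i,j)$ sends $\{C_b:b_i=j,b_r=\ell\}$; $m=\min\{d^{s+1}-\prod_{i=1}^{s+1}(d-k_i):k_i\ge0,\ \sum_i k_i=k,\ k_{s+1}\le s_0\}$. Thus $\gamma_{cc}=Md^s/m$. *)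

(* Defs.v *)
From HB Require Import structures.
From mathcomp Require Import all_boot all_order all_algebra.
From mathcomp Require Import all_classical all_reals all_analysis.
Set Implicit Arguments. Unset Strict Implicit. Unset Printing Implicit Defensive.
Import Order.TTheory GRing.Theory Num.Theory.

(* FCRS with parameters (n,k,s): d = floor(n/s), s0 = n mod s (size of the
   extra cluster s+1).
   Clusters are indexed by 'I_(s.+1); index ord_max is cluster s+1.
   The k_i range over 0..k (forced by sum k_i = k). *)

Definition fcrs_d (n s : nat) : nat := n %/ s.
Definition fcrs_s0 (n s : nat) : nat := n %% s.

Definition cc_admissible (n k s : nat) (kv : {ffun 'I_s.+1 -> 'I_k.+1}) : bool :=
  ((\sum_(i < s.+1) (kv i : nat)) == k) && ((kv ord_max : nat) <= fcrs_s0 n s).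

(* minimum over admissible vectors; the seed d^(s+1) is an upper bound of
   every candidate value, so it does not affect the minimum of a nonempty set *)
Definition cc_m (n k s : nat) : nat :=
  let d := fcrs_d n s in
  \big[minn/d ^ s.+1]_(kv : {ffun 'I_s.+1 -> 'I_k.+1} | @cc_admissible n k s kv)
     (d ^ s.+1 - \prod_(i < s.+1) (d - kv i)).

Local Open Scope ring_scope.

Definition gamma_cc (R : realType) (n k s : nat) (M : R) : R :=
  M * (fcrs_d n s)%:R ^+ s / (cc_m n k s)%:R.

Definition fcrs_do (n s : nat) : nat := (n.-1 %/ s.-1)%N.

Definition gamma_MBR_o (R : realType) (n k s : nat) (M : R) : R :=
  2 * (fcrs_do n s)%:R * M /
  (2 * k%:R * (fcrs_do n s)%:R - k%:R ^+ 2 + k%:R).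

Definition g_ratio (R : realType) (s k s0 : nat) (M : R) : R :=
  gamma_cc (s * k + s0)%N k s M / gamma_MBR_o (s * k + s0)%N k s M.

(* Main.v *)
Require Import Defs.
From HB Require Import structures.
From mathcomp Require Import all_boot all_order all_algebra.
From mathcomp Require Import all_classical all_reals all_analysis.
From mathcomp Require Import ring lra zify.
Import Order.TTheory GRing.Theory Num.Theory.
Local Open Scope ring_scope.

Lemma exp_bound (R : realType) (s : nat) :
  (1 - (s.+1%:R)^-1)^+s.+1 <= expR (-1) :> R.
Proof.
have hp : (0 : R) < s.+1%:R by rewrite ltr0n.
have h1 : (s.+1%:R)^-1 <= 1 :> R.
  by rewrite invf_le1 // ler1n.
have h := expR_ge1Dx (-(s.+1%:R)^-1 : R).
apply: le_trans (lerXn2r s.+1 _ _ h) _.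
- by rewrite nnegrE subr_ge0.
- by rewrite nnegrE expR_ge0.
- by rewrite /= -expRM_natr mulNr mulVf ?gt_eqF.
Qed.
Lemma prod_bound (R : realType) (k s : nat) (kv : {ffun 'I_s.+1 -> 'I_k.+1}) :
  (\sum_(i < s.+1) (kv i : nat))%N = k ->
  (\prod_(i < s.+1) (k - kv i)%N)%:R <= k%:R ^+ s.+1 * expR (-1) :> R.
Proof.
move=> hsum.
set K : R := k%:R.
have hE : forall i, ((k - kv i)%N)%:R = K - (kv i)%:R :> R.
  by move=> i; rewrite natrB // -ltnS.
rewrite natr_prod.
under eq_bigr => i _ do rewrite hE.
have H0 : {in predT, forall i : 'I_s.+1, 0 <= K - (kv i)%:R}.
  by move=> i _; rewrite -hE ler0n.
have h := (leif_AGM H0).1.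
rewrite card_ord in h.
apply: le_trans h _.
have hs : \sum_(i in predT) (kv i : nat)%:R = K :> R.
  by rewrite -natr_sum /K; congr (_ %:R); apply: etrans hsum; apply: eq_bigl.
rewrite sumrB hs sumr_const card_ord.
have -> : (K *+ s.+1 - K) / s.+1%:R = K * (1 - (s.+1%:R)^-1).
  rewrite -mulr_natr; field; rewrite -[X in X != 0](natrD _ 1 s) pnatr_eq0 add1n //=.
rewrite exprMn; apply: ler_wpM2l; first by rewrite exprn_ge0 // ler0n.
exact: exp_bound.
Qed.

Lemma cc_m_ge (R : realType) (n k s : nat) :
  fcrs_d n s = k ->
  k%:R ^+ s.+1 * (1 - expR (-1)) <= (cc_m n k s)%:R :> R.
Proof.
move=> hd; rewrite /cc_m hd.
have he : (0 : R) <= expR (-1) by exact: expR_ge0.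
apply: (big_ind (fun x : nat => k%:R ^+ s.+1 * (1 - expR (-1)) <= x%:R :> R)).
- rewrite natrX ler_piMr ?exprn_ge0 ?ler0n //; lra.
- move=> x y hx hy; rewrite /minn; by case: ltnP.
- move=> kv /andP[/eqP hsum _].
  have hle : (\prod_(i < s.+1) (k - kv i) <= k ^ s.+1)%N.
    apply: (@leq_trans (\prod_(i < s.+1) k)%N).
      apply: leq_prod => i _; exact: leq_subr.
    by rewrite prod_nat_const card_ord.
  rewrite natrB // natrX.
  have := prod_bound R k s kv hsum. lra.
Qed.
Theorem proposition2 (R : realType) (s k s0 : nat) (M : R) :
  (2 <= s)%N -> (1 <= k)%N -> (s0 < minn k s)%N -> 0 < M ->
  g_ratio s k s0 M <=
  (2 * (1 - expR (-1)))^-1 *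
  (((s%:R + 3) * k%:R + s%:R - 3) / ((s%:R + 1) * k%:R - 1)).
Proof.
move=> hs hk hs0 hM.
have hs0k : (s0 < k)%N by move: hs0; rewrite leq_min => /andP[].
have hs0s : (s0 < s)%N by move: hs0; rewrite leq_min => /andP[].
have hd : fcrs_d (s * k + s0) s = k.
  rewrite /fcrs_d mulnC divnMDl; last lia.
  by rewrite divn_small // addn0.
have hm := cc_m_ge R (s * k + s0) k s hd.
rewrite /g_ratio /gamma_cc /gamma_MBR_o hd.
set D := fcrs_do _ _.
have hD1 : (s.-1 * D <= (s * k + s0).-1)%N.
  by rewrite mulnC /D /fcrs_do leq_trunc_div.
have hD2 : (k <= D)%N.
  by rewrite /D /fcrs_do leq_divRL; lia.
have hD3 : ((s.-1 * D).+1 <= s * k + s0)%N by lia.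
set m := (cc_m _ _ _)%:R in hm *.
set K : R := k%:R in hm *.
set S : R := s%:R.
set DR : R := D%:R.
have hSS : (s.-1)%:R + 1 = S by rewrite natr1 prednK //; lia.
have hK1 : 1 <= K by rewrite /K ler1n.
have hS2 : 2 <= S by rewrite /S (ler_nat R 2 s).
have hDK : K <= DR by rewrite /K /DR ler_nat.
have hS0 : (s0%:R : R) + 1 <= K by rewrite /K natr1 ler_nat.
have hDS : (S - 1) * DR + 1 <= S * K + s0%:R.
  rewrite -hSS addrK /DR /S /K -!natrM natr1 -!natrM prednK; last lia.
  move: hD3; rewrite -(ler_nat R) -addn1 !natrD !natrM; lra.
have he1 : expR (-1) < 1 :> R by rewrite expR_lt1 ltrN10.
set c : R := 1 - expR (-1).
have hc : 0 < c by rewrite /c subr_gt0.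
have hP : 0 < K ^+ s by rewrite exprn_gt0 // (lt_le_trans ltr01).
have hKc : 0 < K ^+ s * K * c by rewrite !mulr_gt0 // (lt_le_trans ltr01).
have hm0 : 0 < m by apply: lt_le_trans hm; rewrite exprSr.
have hD0 : 0 < DR by lra.
have hB : 0 < (S + 1) * K - 1 by nra.
have hN : 0 < 2 * K * DR - K ^+ 2 + K by rewrite expr2; nra.
set A := (S + 3) * K + S - 3.
have hA : 0 <= A by rewrite /A; nra.
have -> : M * K ^+ s / m / (2 * DR * M / (2 * K * DR - K ^+ 2 + K)) =
  (K ^+ s * (2 * K * DR - K ^+ 2 + K)) / (2 * DR * m).
  field; apply/and4P; split; rewrite ?gt_eqF //; lra.
have -> : (2 * c)^-1 * (A / ((S + 1) * K - 1)) = A / (2 * c * ((S + 1) * K - 1)).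
  field; apply/andP; split; apply: lt0r_neq0 => //; exact: hB.
rewrite ler_pdivlMr; last by rewrite !mulr_gt0.
rewrite mulrAC ler_pdivrMr; last by rewrite !mulr_gt0.
have key : (2 * DR - K + 1) * ((S + 1) * K - 1) <= A * DR.
  have : 0 <= (K - 1) * ((S + 1) * K - 1 - (S - 1) * DR).
    apply: mulr_ge0; lra.
  rewrite /A; nra.
apply: (@le_trans _ _ (2 * (K ^+ s * K * c) * (A * DR))).
  have -> : K ^+ s * (2 * K * DR - K ^+ 2 + K) * (2 * c * ((S + 1) * K - 1))
     = 2 * (K ^+ s * K * c) * ((2 * DR - K + 1) * ((S + 1) * K - 1)).
    rewrite expr2; ring.
  by apply: ler_wpM2l => //; rewrite mulr_ge0 // ltW.
have -> : 2 * (K ^+ s * K * c) * (A * DR) = (A * (2 * DR)) * (K ^+ s * K * c).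
  ring.
have -> : A * (2 * DR * m) = (A * (2 * DR)) * m by ring.
apply: ler_wpM2l; first by rewrite mulr_ge0 // mulr_ge0 // ltW.
by move: hm; rewrite exprSr.
Qed.
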